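(* Let $\Omega$ be a finite set of skills over a state space $\mathcal{S}$, where each $\omega\in\Omega$ has a true initiation set $I_\omega\subseteq\mathcal{S}$ and termination set $\beta_\omega\subseteq\mathcal{S}$, and let $\mathcal{M}^*$ be a complete model for $\Omega$ realizing exactly these sets. Let $\mu$ be a probability distribution over $\mathcal{S}\times\Omega\times\mathcal{S}$. Let $\mathcal{H}$ be a finite hypothesis class of models, each $\mathcal{M}=(\mathcal{P},\mathcal{A})\in\mathcal{H}$ assigning to every $\omega\in\Omega$ a learned initiation set $\widehat I_\omega=\bigcup_{a\in\mathcal{A}_\omega}\mathcal{G}(\mathrm{Pre}_a)$ and learned termination set $\widehat\beta_\omega=\bigcup_{a\in\mathcal{A}_\omega}\big(\mathcal{G}(\mathrm{Pre}_a)\setminus\mathcal{G}(\mathrm{Eff}^-_a)\big)\cup\mathcal{G}(\mathrm{Eff}^+_a)$. For $\mathcal{M}\in\mathcal{H}$ define \[d_{\mathrm{compl}}(\mathcal{M},\mathcal{M}^* )=\Pr_{(s,\omega,s')\sim\mu}\big[(s\in\widehat I_\omega\,\triangle\, I_\omega)\vee(s'\in\widehat\beta_\omega\,\triangle\,\beta_\omega)\big].\] Let $n$ i.i.d. samples $(s_i,\omega_i,s_i')_{i=1}^n$ be drawn from $\mu$, and let $\widehat{\mathcal{M}}_n\in\mathcal{H}$ be the model learned by SkillWrapper from them, which is consistent with every sample, i.e. for all $i$: $s_i\notin\widehat I_{\omega_i}\triangle I_{\omega_i}$ and $s_i'\notin\widehat\beta_{\omega_i}\triangle\beta_{\omega_i}$.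 Then for every $\epsilon>0$, \[\Pr\big[d_{\mathrm{compl}}(\widehat{\mathcal{M}}_n,\mathcal{M}^* )\le\epsilon\big]\ge 1-|\mathcal{H}|\,e^{-n\epsilon}.\]
   Context: A model $\mathcal{M}=(\mathcal{P},\mathcal{A})$ consists of a set of predicates $\mathcal{P}$ and a set of operators $\mathcal{A}=\bigcup_{\omega}\mathcal{A}_\omega$, where $\mathcal{A}_\omega$ are the operators associated with skill $\omega$; each operator $a$ has a precondition set $\mathrm{Pre}_a$ and add/delete effect sets $\mathrm{Eff}^+_a,\mathrm{Eff}^-_a$ of predicates. The grounding function $\mathcal{G}$ maps a set of predicates to the set of low-level states in which all those predicates hold. $\triangle$ denotes symmetric difference. *)

(* Defs.v *)
From HB Require Import structures.
From mathcomp Require Import all_boot all_order all_algebra.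
From mathcomp Require Import all_classical all_reals all_analysis.
Set Implicit Arguments. Unset Strict Implicit. Unset Printing Implicit Defensive.
Import Order.TTheory GRing.Theory Num.Theory.
Local Open Scope classical_set_scope.
Local Open Scope ring_scope.

Definition symdiff {T : Type} (A B : set T) : set T := (A `\` B) `|` (B `\` A).

(* A (lifted) operator over a predicate universe P: precondition,
   add effects and delete effects. *)
Record operator (P : Type) := Operator {
  pre : set P ; effp : set P ; effm : set P }.

(* Predicates are drawn
   from a universe P; [preds] is the model's predicate set, [grnd p] the set of
   low-level states where predicate p holds, [ops w] the operators A_w. *)
Record model (S Om P : Type) := Model {
  preds : set P ;
  grnd : P -> set S ;
  ops : Om -> set (operator P) }.

Definition grounding {S Om P : Type} (M : model S Om P) (Q : set P) : set S :=
  [set s | forall p, Q p -> grnd M p s].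

Definition Ihat {S Om P : Type} (M : model S Om P) (w : Om) : set S :=
  \bigcup_(a in ops M w) grounding M (pre a).

Definition bhat {S Om P : Type} (M : model S Om P) (w : Om) : set S :=
  \bigcup_(a in ops M w)
     ((grounding M (pre a) `\` grounding M (effm a)) `|` grounding M (effp a)).

Definition consistent {S Om P : Type} (I beta : Om -> set S)
    (M : model S Om P) (z : S * Om * S) : Prop :=
  ~ symdiff (Ihat M z.1.2) (I z.1.2) z.1.1 /\
  ~ symdiff (bhat M z.1.2) (beta z.1.2) z.2.

Definition dcompl (dS dO : measure_display) (S : measurableType dS)
    (Om : measurableType dO) (P : Type) (R : realType)
    (mu : probability (S * Om * S)%type R) (I beta : Om -> set S)
    (M : model S Om P) : \bar R :=
  mu [set z | ~ consistent I beta M z].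

Definition iid (dT dZ : measure_display) (T : measurableType dT)
    (Z : measurableType dZ) (R : realType) (Pr : probability T R)
    (mu : probability Z R) (n : nat) (X : 'I_n -> T -> Z) : Prop :=
  (forall i, measurable_fun setT (X i)) /\
  (forall i (A : set Z), measurable A -> Pr (X i @^-1` A) = mu A) /\
  (forall A : 'I_n -> set Z, (forall i, measurable (A i)) ->
     Pr (\bigcap_(i in [set: 'I_n]) (X i @^-1` A i)) =
     (\prod_(i < n) Pr (X i @^-1` A i))%E).

(* Main.v *)
Require Import Defs.
From HB Require Import structures.
From mathcomp Require Import all_boot all_order all_algebra.
From mathcomp Require Import all_classical all_reals all_analysis.
From mathcomp Require Import lra.
Import Order.TTheory GRing.Theory Num.Theory.
Local Open Scope classical_set_scope.
Local Open Scope ring_scope.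

Lemma prod_EFin_cst (R : realType) (x : R) n :
  (\prod_(i < n) x%:E = (x ^+ n)%:E)%E.
Proof.
elim: n => [|n IH]; first by rewrite big_ord0.
by rewrite big_ord_recr /= IH -EFinM exprSr.
Qed.

Lemma preimT_meas d1 d2 (A : measurableType d1) (B : measurableType d2)
  (f : A -> B) (Y : set B) :
  measurable_fun setT f -> measurable Y -> measurable (f @^-1` Y).
Proof. by move=> mf mY; have := mf measurableT Y mY; rewrite setTI. Qed.

Lemma consistent_meas (dS dO : measure_display) (S : measurableType dS)
  (Om : measurableType dO) (P : Type)
  (Om_fin : finite_set [set: Om])
  (Om_sing : forall w : Om, measurable [set w])
  (I beta : Om -> set S)
  (I_meas : forall w, measurable (I w))
  (beta_meas : forall w, measurable (beta w))
  (M : model S Om P)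
  (Mm : forall w, measurable (Ihat M w) /\ measurable (bhat M w)) :
  measurable [set z : (S * Om * S)%type | consistent I beta M z].
Proof.
have -> : [set z : (S * Om * S)%type | consistent I beta M z] =
  \bigcup_(w in [set: Om]) ((fun z : (S * Om * S)%type => z.1.2) @^-1` [set w] `&`
     ((fun z : (S * Om * S)%type => z.1.1) @^-1` (~` symdiff (Ihat M w) (I w)) `&`
      (fun z : (S * Om * S)%type => z.2) @^-1` (~` symdiff (bhat M w) (beta w)))).
  apply/seteqP; split => z.
    by move=> [h1 h2]; exists z.1.2 => //.
  by move=> [w _ [/= zw [h1 h2]]]; rewrite /consistent zw.
apply: fin_bigcup_measurable => // w _.
have mfs : measurable_fun setT (fun z : (S * Om * S)%type => z.1.2).
  exact: (measurableT_comp measurable_snd measurable_fst).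
have mff : measurable_fun setT (fun z : (S * Om * S)%type => z.1.1).
  exact: (measurableT_comp measurable_fst measurable_fst).
have [mI mb] := Mm w.
apply: measurableI; first exact: preimT_meas.
apply: measurableI; apply: preimT_meas.
- exact: mff.
- apply: measurableC; apply: measurableU; apply: measurableD => //.
- exact: measurable_snd.
- apply: measurableC; apply: measurableU; apply: measurableD => //.
Qed.

Theorem mainTheorem2
  (R : realType)
  (dS dO dT : measure_display)
  (S : measurableType dS)              (* state space *)
  (Om : measurableType dO)             (* skills *)
  (P : Type)                           (* universe of predicates *)
  (T : measurableType dT) (Pr : probability T R)  (* underlying sample space *)
  (Om_fin : finite_set [set: Om])
  (Om_sing : forall w : Om, measurable [set w])
  (I beta : Om -> set S)               (* true initiation / termination sets *)
  (I_meas : forall w, measurable (I w))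
  (beta_meas : forall w, measurable (beta w))
  (Mstar : model S Om P)
  (Mstar_real : forall w, Ihat Mstar w = I w /\ bhat Mstar w = beta w)
  (mu : probability (S * Om * S)%type R)
  (H : finType) (models : H -> model S Om P)   (* finite hypothesis class *)
  (models_inj : injective models)
  (models_meas : forall h w, measurable (Ihat (models h) w) /\
                             measurable (bhat (models h) w))
  (n : nat) (X : 'I_n -> T -> (S * Om * S)%type)
  (X_iid : iid Pr mu X)
  (Mhat : T -> H)                      (* learned model, as a function of the samples *)
  (Mhat_meas : forall h, measurable (Mhat @^-1` [set h]))
  (Mhat_cons : forall t i, consistent I beta (models (Mhat t)) (X i t))
  (eps : R) (eps_pos : 0 < eps) :
  ((1 - #|H|%:R * expR (- (n%:R * eps)))%:E <=
     Pr [set t | (dcompl mu I beta (models (Mhat t)) <= eps%:E)%E])%E.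
Proof.
set C := fun h => [set z : (S * Om * S)%type | consistent I beta (models h) z].
have mC h : measurable (C h) by apply: consistent_meas.
set G := [set h | (dcompl mu I beta (models h) <= eps%:E)%E].
set E := [set t | (dcompl mu I beta (models (Mhat t)) <= eps%:E)%E].
set K0 := expR (- (n%:R * eps)).
have EE : E = \bigcup_(h in G) Mhat @^-1` [set h].
  by apply/seteqP; split => t /=; [move=> Et; exists (Mhat t) | move=> [h Gh /= Mt]; rewrite /E /= Mt].
have mE : measurable E.
  by rewrite EE; apply: fin_bigcup_measurable => //; exact: finite_finset.
have mEc : measurable (~` E) by apply: measurableC.
have bnd h : (Pr (Mhat @^-1` [set h] `&` ~` E) <= K0%:E)%E.
  have [Gh|nGh] := pselect (G h).
    have -> : Mhat @^-1` [set h] `&` ~` E = set0.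
      by apply/seteqP; split => t //= [Mt]; apply; rewrite /E /= Mt.
    by rewrite measure0 lee_fin expR_ge0.
  have mX i : measurable (X i @^-1` C h).
    by apply: preimT_meas => //; exact: (X_iid.1 i).
  have mcap : measurable (\bigcap_(i in [set: 'I_n]) X i @^-1` C h).
    by apply: fin_bigcap_measurable => //; exact: finite_finset.
  apply: (@le_trans _ _ (Pr (\bigcap_(i in [set: 'I_n]) X i @^-1` C h))).
    apply: le_measure; rewrite ?inE //.
    - by apply: measurableI => //.
    - by move=> t [/= Mt _] i _ /=; rewrite /C /= -Mt; exact: Mhat_cons.
  rewrite (X_iid.2.2 (fun _ => C h)) //.
  under eq_bigr do rewrite (X_iid.2.1 _ _ (mC h)).
  have muge0 : (0 <= mu (C h))%E by apply: measure_ge0.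
  have mufin : mu (C h) \is a fin_num.
    by rewrite ge0_fin_numE // (le_lt_trans (probability_le1 _ (mC h))) ?ltey.
  have cE : mu (C h) = (fine (mu (C h)))%:E by rewrite fineK.
  set c := fine (mu (C h)) in cE.
  rewrite cE prod_EFin_cst lee_fin.
  have c0 : 0 <= c by rewrite -lee_fin -cE.
  have dc : dcompl mu I beta (models h) = mu (~` C h) by [].
  have : ~ (dcompl mu I beta (models h) <= eps%:E)%E by [].
  rewrite dc probability_setC // cE -EFinB lee_fin => /negP; rewrite -ltNge => lt1.
  have cle : c <= expR (- eps).
    by apply: (le_trans _ (expR_ge1Dx _)); lra.
  rewrite /K0 -mulrN expRM_natl.
  apply: lerXn2r => //; rewrite ?inE /=.
  by rewrite nnegrE expR_ge0.
have EcU : ~` E = \bigcup_(h in [set: H]) (Mhat @^-1` [set h] `&` ~` E).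
  by apply/seteqP; split => t //=; [move=> nE; exists (Mhat t) | move=> [h0 _ []]].
have Ecb : (Pr (~` E) <= (#|H|%:R * K0)%:E)%E.
  rewrite EcU measure_fin_bigcup; first last.
  - by move=> h _; apply: measurableI => //.
  - by move=> i j _ _ [t [[/= <-] _] [/= <-] _].
  - exact: finite_finset.
  apply: (@le_trans _ _ (\sum_(h \in [set: H]) K0%:E)%E).
    by apply: lee_fsum; [exact: finite_finset | move=> h _; exact: bnd].
  rewrite fsumEFin; last exact: finite_finset.
  rewrite lee_fin (fsbigE (enum H)) ?enum_uniq //; last first.
    by move=> i _; rewrite mem_enum.
  under eq_bigl do rewrite in_setT.
  rewrite big_const_seq count_predT -cardE.
  elim: #|H| => [|m IH]; first by rewrite mul0r.
  rewrite iterS /= -addn1 natrD mulrDl mul1r; lra.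
have ge0c : (0 <= Pr (~` E))%E by apply: measure_ge0.
have finc : Pr (~` E) \is a fin_num.
  by rewrite ge0_fin_numE // (le_lt_trans (probability_le1 _ mEc)) ?ltey.
rewrite -[E]setCK probability_setC // -(fineK finc) -EFinB lee_fin.
move: Ecb; rewrite -(fineK finc) lee_fin => Ecb.
lra.
Qed.
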